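(* Let $k=\delta n$ with $\delta = \omega(\log^{-1/3} n)$, let $G=(X\dot\cup Y,E)$ be a $k$-regular bipartite graph on $2n$ vertices, let $(S,T)$ be a cut of $G$, and let $G_1\sim G(p_1)$ with $p_1 = \frac{\log n - \log\log\log\log n}{k}$. W.v.h.p. the following holds: if $A\subseteq V$ is a partite set with $|A|\le n^{0.9}$ such that every $x\in A$ satisfies $\deg^{\mathrm{Par}}_{G_1}(x)\ge \frac{1}{1000}\log n$, then $A$ has at least $|A|\cdot\frac{1}{2000}\log n$ parallel neighbors in $G_1$.
   Context: $V=X\cup Y$. A set $A$ is partite if $A\subseteq X$ or $A\subseteq Y$. A cut is a pair $(S,T)$ with $S\subseteq X$, $T\subseteq Y$; cross edges w.r.t. $(S,T)$ are edges joining $S$ to $Y\setminus T$ or $X\setminus S$ to $T$, and all other edges are parallel. $\deg^{\mathrm{Par}}_{G_1}(x)$ is the number of parallel edges of $G_1$ incident to $x$; a parallel neighbor of $A$ in $G_1$ is a vertex joined to some vertex of $A$ by a parallel edge of $G_1$. $G(p)$ retains each edge of $G$ independently with probability $p$. A sequence of events $A_n$ holds with very high probability (w.v.h.p.) if $\log(\mathbb P[A_n^c])=-\Omega(\log n)$. *)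

(* Defs.v *)
From HB Require Import structures.
From mathcomp Require Import all_boot all_order all_algebra.
From mathcomp Require Import reals exp.
Set Implicit Arguments. Unset Strict Implicit. Unset Printing Implicit Defensive.
Import Order.TTheory GRing.Theory Num.Theory.
Local Open Scope ring_scope.

(* A bipartite graph G = (X ∪ Y, E) with X = Y = 'I_n (two disjoint copies),
   given by its bipartite adjacency  E x y  (x in X, y in Y).
   Edges are pairs (x, y) : 'I_n * 'I_n. *)
Definition edges (n : nat) (E : 'I_n -> 'I_n -> bool) : {set 'I_n * 'I_n} :=
  [set e | E e.1 e.2].

Definition bip_regular (n k : nat) (E : 'I_n -> 'I_n -> bool) : Prop :=
  (forall x : 'I_n, #|[set y | E x y]| = k) /\
  (forall y : 'I_n, #|[set x | E x y]| = k).

(* Cut (S, T), S ⊆ X, T ⊆ Y.  The edge xy is cross iff (x ∈ S, y ∉ T) or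
   (x ∉ S, y ∈ T); otherwise parallel. *)
Definition parallel (n : nat) (S T : {set 'I_n}) (x y : 'I_n) : bool :=
  (x \in S) == (y \in T).

Definition pardegX n (S T : {set 'I_n}) (F : {set 'I_n * 'I_n}) (x : 'I_n) : nat :=
  #|[set y | ((x, y) \in F) && parallel S T x y]|.
Definition pardegY n (S T : {set 'I_n}) (F : {set 'I_n * 'I_n}) (y : 'I_n) : nat :=
  #|[set x | ((x, y) \in F) && parallel S T x y]|.

Definition parnbrX n (S T : {set 'I_n}) (F : {set 'I_n * 'I_n}) (A : {set 'I_n})
  : {set 'I_n} :=
  [set y | [exists x in A, ((x, y) \in F) && parallel S T x y]].
Definition parnbrY n (S T : {set 'I_n}) (F : {set 'I_n * 'I_n}) (A : {set 'I_n})
  : {set 'I_n} :=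
  [set x | [exists y in A, ((x, y) \in F) && parallel S T x y]].

Definition Gp_prob (R : realType) n (E : 'I_n -> 'I_n -> bool) (p : R)
  (P : {set 'I_n * 'I_n} -> bool) : R :=
  \sum_(F : {set 'I_n * 'I_n} | (F \subset edges E) && P F)
     p ^+ #|F| * (1 - p) ^+ (#|edges E| - #|F|).

Definition good_event (R : realType) n (S T : {set 'I_n}) (F : {set 'I_n * 'I_n})
  : bool :=
  let L : R := ln (n%:R) in
  [forall A : {set 'I_n},
     ((#|A|%:R <= (n%:R : R) `^ (9 / 10)) &&
      [forall x in A, (pardegX S T F x)%:R >= L / 1000]) ==>
     ((#|parnbrX S T F A|)%:R >= (#|A|)%:R * (L / 2000))] &&
  [forall A : {set 'I_n},
     ((#|A|%:R <= (n%:R : R) `^ (9 / 10)) &&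
      [forall y in A, (pardegY S T F y)%:R >= L / 1000]) ==>
     ((#|parnbrY S T F A|)%:R >= (#|A|)%:R * (L / 2000))].

Definition p1 (R : realType) (n k : nat) : R :=
  (ln (n%:R) - ln (ln (ln (ln (n%:R))))) / k%:R.

(* Main.v *)
Require Import Defs.
From HB Require Import structures.
From mathcomp Require Import all_boot all_order all_algebra.
From mathcomp Require Import reals exp sequences.
From mathcomp Require Import ring lra.
Import Order.TTheory GRing.Theory Num.Theory.
Local Open Scope ring_scope.

Lemma sum_pow_card (R : realType) (T : finType) (z : R) :
  \sum_(B : {set T}) z ^+ #|B| = (z + 1) ^+ #|T|.
Proof.
rewrite -prodr_const (bigA_distr _ _ (fun _ => z) (fun _ => 1)).
apply: eq_bigr => B _.
by rewrite -big_mkcond /= prodr_const.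
Qed.

Lemma single_le (R : realType) (I : finType) (P : pred I) (f : I -> R) j :
  P j -> (forall i, P i -> 0 <= f i) -> f j <= \sum_(i | P i) f i.
Proof.
move=> Pj f0; rewrite (bigD1 j) //= lerDl; apply: sumr_ge0 => i /andP[Pi _].
exact: f0.
Qed.

Lemma weight_prod (R : realType) (T : finType) (D F : {set T}) (c : pred T) (p t : R) :
  F \subset D ->
  p ^+ #|F| * (1 - p) ^+ (#|D| - #|F|) * t ^+ #|[set e in F | c e]| =
  \prod_i (if i \in F then (if i \in D then p * (if c i then t else 1) else 0)
           else (if i \in D then 1 - p else 1)).
Proof.
move=> sFD.
rewrite (bigID (mem F)) /=.
set P1 := \prod_(i | _ \in F) _.
set P2 := \prod_(i | ~~ (_ \in F)) _.
have -> : P1 = p ^+ #|F| * t ^+ #|[set e in F | c e]|.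
  rewrite /P1 (eq_bigr (fun i => p * (if c i then t else 1))); last first.
    by move=> i Fi; rewrite Fi (subsetP sFD i Fi).
  rewrite big_split /= prodr_const -big_mkcondr /= prodr_const.
  congr (_ ^+ _ * _ ^+ _); apply: eq_card => i; rewrite !inE //.
have -> : P2 = (1 - p) ^+ (#|D| - #|F|).
  rewrite /P2 (eq_bigr (fun i => if i \in D then 1 - p else 1)); last first.
    by move=> i NF; rewrite (negbTE NF).
  rewrite -big_mkcondr /= prodr_const.
  congr (_ ^+ _).
  rewrite -[in RHS](setIidPr sFD) -cardsD; apply: eq_card => i; rewrite !inE.
  by [].
ring.
Qed.

Lemma sumF_bound (R : realType) (T : finType) (D : {set T}) (c : pred T) (p t : R) :
  0 <= p <= 1 -> 1 <= t ->
  \sum_(F : {set T} | F \subset D)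
     p ^+ #|F| * (1 - p) ^+ (#|D| - #|F|) * t ^+ #|[set e in F | c e]|
  <= expR (p * t * #|[set e | c e]|%:R).
Proof.
move=> /andP[p0 p1] t1.
set Fp := fun i => if i \in D then p * (if c i then t else 1) else 0.
set Gp := fun i => if i \in D then 1 - p else 1.
have -> : \sum_(F : {set T} | F \subset D)
     p ^+ #|F| * (1 - p) ^+ (#|D| - #|F|) * t ^+ #|[set e in F | c e]|
   = \sum_(F : {set T}) \prod_i (if i \in F then Fp i else Gp i).
  rewrite big_mkcond /=; apply: eq_bigr => F _.
  case: ifP => sFD; first exact: weight_prod.
  have [i iF iD] : exists2 i, (i \in F) & (i \notin D).
    by move/negbT: sFD => /subsetPn [i iF iD]; exists i.
  by rewrite (bigD1 i) //= iF /Fp (negbTE iD) mul0r.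
rewrite -bigA_distr.
have -> : p * t * #|[set e | c e]|%:R = \sum_i (if c i then p * t else 0).
  by rewrite -big_mkcond /= sumr_const cardsE mulr_natr.
rewrite expR_sum; apply: ler_prod => i _.
change (0 <= Fp i + Gp i <= expR (if c i then p * t else 0)).
have t0 : 0 <= t by apply: le_trans t1.
rewrite /Fp /Gp; case: (i \in D); case: (c i); rewrite ?expR0.
- apply/andP; split; first by rewrite addr_ge0 ?mulr_ge0 ?subr_ge0.
  apply: le_trans (expR_ge1Dx _); nra.
- by rewrite mulr1 subrKC lexx ler01.
- by rewrite add0r ler01 /= -expR0 ler_expR mulr_ge0.
- by rewrite add0r ler01 lexx.
Qed.
Definition cell {n} (s : bool) (A B : {set 'I_n}) (e : 'I_n * 'I_n) : bool :=
  if s then (e.1 \in A) && (e.2 \in B) else (e.2 \in A) && (e.1 \in B).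

Lemma pair_count (T : finType) (A : {set T}) (Q : T -> T -> bool) (S : {set T * T}) :
  (forall x y, x \in A -> Q x y -> (x, y) \in S) ->
  (\sum_(x in A) #|[set y | Q x y]| <= #|S|)%N.
Proof.
move=> HS.
have -> : (\sum_(x in A) #|[set y | Q x y]| = \sum_(x in A) \sum_(y | Q x y) 1)%N.
  by apply: eq_bigr => x _; rewrite sum1_card cardsE.
rewrite pair_big_dep /= sum1_card; apply: subset_leq_card.
by apply/subsetP => -[x y]; rewrite unfold_in /= => /andP[xA Qxy]; apply: HS.
Qed.

Lemma bad_witness (R : realType) n (S T : {set 'I_n}) F :
  ~~ good_event R S T F ->
  exists s (A : {set 'I_n}), [/\ (0 < #|A|)%N, #|A|%:R <= (n%:R : R) `^ (9/10) &
    exists B : {set 'I_n}, (#|B|%:R < #|A|%:R * (ln (n%:R : R) / 2000)) /\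
      #|A|%:R * (ln (n%:R:R) / 1000) <= (#|[set e in F | cell s A B e]|)%:R].
Proof.
rewrite /good_event negb_and => /orP[] /forallPn [A]; rewrite negb_imply -ltNge
  => /andP[/andP[Asz /forallP Hdeg] Hlt].
- exists true, A; split => //.
    rewrite card_gt0; apply/negP => /eqP A0; move: Hlt; rewrite A0 cards0 mul0r.
    by rewrite ltNge ler0n.
  exists (parnbrX S T F A); split => //.
  apply: (le_trans _ (_ : (\sum_(x in A) pardegX S T F x)%:R <= _)).
    rewrite natr_sum mulr_natl -sumr_const; apply: ler_sum => x xA.
    by have := Hdeg x; rewrite xA.
  rewrite ler_nat; apply: pair_count => x y xA Qxy.
  case/andP: Qxy => inF par; rewrite !inE inF /cell /= xA /=; rewrite /parnbrX inE; apply/existsP; exists x; by rewrite xA inF par.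
- exists false, A; split => //.
    rewrite card_gt0; apply/negP => /eqP A0; move: Hlt; rewrite A0 cards0 mul0r.
    by rewrite ltNge ler0n.
  exists (parnbrY S T F A); split => //.
  apply: (le_trans _ (_ : (\sum_(x in A) pardegY S T F x)%:R <= _)).
    rewrite natr_sum mulr_natl -sumr_const; apply: ler_sum => x xA.
    by have := Hdeg x; rewrite xA.
  rewrite ler_nat.
  set S1 := [set e in F | cell false A (parnbrY S T F A) e].
  have <- : #|[set (e.2, e.1) | e in S1]| = #|S1|.
    by apply: card_imset => -[a b] [c d] /= [-> ->].
  apply: pair_count => y x yA Qxy.
  apply/imsetP; exists (x, y) => //.
  case/andP: Qxy => inF par; rewrite !inE inF /cell /= yA /=.
  rewrite /parnbrY inE; apply/existsP; exists y; by rewrite yA inF par.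
Qed.
Definition L0 (R : realType) : R := (48 * 1000) * expR 4000 + expR (expR 1) + 30.

Lemma cube_le_exp (R : realType) (x : R) : 0 <= x -> x ^+ 3 / 6 <= expR x.
Proof.
move=> x0; apply: le_trans (expR_ge1Dxn 2 x0).
have -> : (3`!)%:R = 6 :> R by [].
have : 0 <= x ^+ 3 / 6 by rewrite divr_ge0 // exprn_ge0.
lra.
Qed.

Lemma ana1 (R : realType) (L a p : R) :
  L0 R <= L -> 1 <= a -> ln a <= 9/10 * L -> 0 <= p -> p * expR L <= L ^+ 2 ->
  p * expR ((L - ln a) / 2 + 4000) * a <= 1.
Proof.
move=> HL a1 la p0 pL.
have a0 : 0 < a by lra.
have Lpos : (48 * 1000) * expR 4000 <= L.
  have := expR_ge0 (expR (1:R)); rewrite /L0 in HL; lra.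
have e0 := expR_gt0 (4000:R).
have L0' : 0 < L by lra.
set l := ln a.
have -> : a = expR l by rewrite /l lnK.
have -> : p * expR ((L - l) / 2 + 4000) * expR l =
          (p * expR L) * expR (4000 - (L - l) / 2).
  by rewrite -!mulrA -!expRD; congr (_ * expR _); lra.
apply: (le_trans (y := L ^+ 2 * expR (4000 - L / 20))).
  apply: ler_pM => //; first by rewrite mulr_ge0 // expR_ge0.
    exact: expR_ge0.
  by rewrite ler_expR /l; lra.
have Hc := @cube_le_exp R (L / 20) (ltac:(lra)).
rewrite expRB.
rewrite mulrA ler_pdivrMr ?expR_gt0 // mul1r.
apply: le_trans Hc.
have -> : (L / 20) ^+ 3 / 6 = L ^+ 2 * (L / (48 * 1000)) by rewrite !exprS expr0; field.
apply: ler_wpM2l; first by rewrite exprn_ge0 // ltW.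
rewrite ler_pdivlMr; lra.
Qed.

Lemma ana2 (R : realType) (L a p : R) :
  L0 R <= L -> 1 <= a -> ln a <= 9/10 * L -> 0 <= p -> p * expR L <= L ^+ 2 ->
  (L - ln a) * (a * (L / 2000)) - ((L - ln a) / 2 + 4000) * (a * (L / 1000))
  + expR L * expR (p * expR ((L - ln a) / 2 + 4000) * a - (L - ln a))
  <= - 3 * L * a.
Proof.
move=> HL a1 la p0 pL.
have H1 := @ana1 R _ _ _ HL a1 la p0 pL.
have a0 : 0 < a by lra.
have E1 : expR 1 <= L.
  have := expR_ge1Dx (expR (1:R)); have := expR_ge0 (4000:R).
  rewrite /L0 in HL; lra.
have -> : (L - ln a) * (a * (L / 2000)) - ((L - ln a) / 2 + 4000) * (a * (L / 1000))
   = - 4 * L * a by field.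
have : expR L * expR (p * expR ((L - ln a) / 2 + 4000) * a - (L - ln a)) <= expR 1 * a.
  rewrite -expRD -[X in _ <= _ * X](lnK (_ : a \in Num.pos)) ?posrE // -expRD ler_expR.
  lra.
have : expR 1 * a <= L * a by rewrite ler_wpM2r // ltW.
lra.
Qed.

Lemma eqle (R : realType) (x y : R) : x = y -> x <= y.
Proof. by move=> ->. Qed.

Lemma card_cell n s (A B : {set 'I_n}) : #|[set e | cell s A B e]| = (#|A| * #|B|)%N.
Proof.
case: s.
  by rewrite -cardsX; apply: eq_card => -[x y]; rewrite !inE.
by rewrite mulnC -cardsX; apply: eq_card => -[x y]; rewrite !inE andbC.
Qed.

Definition wt {R : realType} {T : finType} (D : {set T}) (p : R) (F : {set T}) : R :=
  p ^+ #|F| * (1 - p) ^+ (#|D| - #|F|).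

Definition gfun {R : realType} {n} (L : R) (s : bool) (A B : {set 'I_n}) (F : {set 'I_n * 'I_n}) : R :=
  expR ((L - ln (#|A|%:R : R)) * (#|A|%:R * (L / 2000) - #|B|%:R)
      + ((L - ln (#|A|%:R : R)) / 2 + 4000)
        * (#|[set e in F | cell s A B e]|%:R - #|A|%:R * (L / 1000))).

Lemma perA (R : realType) n (D : {set 'I_n * 'I_n}) (p L : R) (s : bool) (A : {set 'I_n}) :
  0 <= p <= 1 -> p * expR L <= L ^+ 2 -> n%:R = expR L -> L0 R <= L ->
  (0 < #|A|)%N -> ln (#|A|%:R : R) <= 9/10 * L ->
  \sum_(B : {set 'I_n}) \sum_(F : {set 'I_n * 'I_n} | F \subset D) wt D p F * gfun L s A B F
    <= expR (- 3 * L) ^+ #|A|.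
Proof.
move=> /andP[p0 p1] pL nL HL A0 la.
have a1 : 1 <= (#|A|%:R : R) by rewrite ler1n.
set a := (#|A|%:R : R) in a1 la *.
set u := L - ln a.
set v := u / 2 + 4000.
have v0 : 0 <= v.
  have : 0 <= ln a by rewrite ln_ge0.
  have := expR_ge0 (4000:R); have := expR_ge0 (expR (1:R)).
  rewrite /L0 in HL; rewrite /v /u; lra.
have t1 : 1 <= expR v by rewrite -expR0 ler_expR.
have step : forall B : {set 'I_n},
  \sum_(F : {set 'I_n * 'I_n} | F \subset D) wt D p F * gfun L s A B F
  <= expR (u * (a * (L / 2000)) - v * (a * (L / 1000)))
     * expR (p * expR v * a - u) ^+ #|B|.
  move=> B.
  have gE : forall F, gfun L s A B F =
     expR (u * (a * (L / 2000)) - v * (a * (L / 1000))) *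
     (expR (- u) ^+ #|B| * expR v ^+ #|[set e in F | cell s A B e]|).
    by move=> F; rewrite /gfun -!expRM_natl -!expRD; congr expR; rewrite -/a -/u -/v; ring.
  under eq_bigr => F _ do rewrite gE.
  set C := expR (u * (a * (L / 2000)) - v * (a * (L / 1000))).
  set X := expR (- u) ^+ #|B|.
  have -> : \sum_(F : {set 'I_n * 'I_n} | F \subset D)
      wt D p F * (C * (X * expR v ^+ #|[set e in F | cell s A B e]|))
    = C * (X * \sum_(F : {set 'I_n * 'I_n} | F \subset D)
      (wt D p F * expR v ^+ #|[set e in F | cell s A B e]|)).
    by rewrite !mulr_sumr; apply: eq_bigr => F _; ring.
  have X0 : 0 <= X by rewrite exprn_ge0 // expR_ge0.
  apply: ler_wpM2l; first exact: expR_ge0.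
  have := @sumF_bound R _ D (cell s A B) p (expR v) (ltac:(by rewrite p0 p1)) t1.
  rewrite card_cell => Hs.
  apply: le_trans (ler_wpM2l X0 Hs) _.
  by rewrite /X -!expRM_natl -expRD natrM ler_expR -/a; apply: eqle; ring.
apply: le_trans (ler_sum _ (fun B _ => step B)) _.
rewrite -mulr_sumr sum_pow_card card_ord.
apply: le_trans (_ : expR (u * (a * (L / 2000)) - v * (a * (L / 1000)))
     * expR (expR (p * expR v * a - u)) ^+ n <= _).
  apply: ler_wpM2l; first exact: expR_ge0.
  apply: lerXn2r; rewrite ?nnegrE ?addr_ge0 ?expR_ge0 //.
  by rewrite addrC expR_ge1Dx.
rewrite -expRM_natl -expRD -expRM_natl ler_expR nL.
have := @ana2 R L a p HL a1 la p0 pL.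
rewrite -/u -/v => H; apply: le_trans H _; apply: eqle; ring.
Qed.

Lemma sum3_ge (R : realType) (I J K : finType) (P : pred J) (f : I -> J -> K -> R) i j k :
  P j -> (forall i j k, P j -> 0 <= f i j k) ->
  f i j k <= \sum_i \sum_(j | P j) \sum_k f i j k.
Proof.
move=> Pj f0.
apply: le_trans (@single_le R I xpredT (fun i => \sum_(j | P j) \sum_k f i j k) i isT _); last first.
  by move=> i' _; apply: sumr_ge0 => j' Pj'; apply: sumr_ge0 => k' _; exact: f0.
apply: le_trans (@single_le R J P (fun j => \sum_k f i j k) j Pj _); last first.
  by move=> j' Pj'; apply: sumr_ge0 => k' _; exact: f0.
by apply: (@single_le R K xpredT (fun k => f i j k) k) => // k' _; exact: f0.
Qed.

Lemma sub_sum (R : realType) (I : finType) (P Q : pred I) (f : I -> R) :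
  (forall i, P i -> Q i) -> (forall i, Q i -> 0 <= f i) ->
  \sum_(i | P i) f i <= \sum_(i | Q i) f i.
Proof.
move=> PQ f0; rewrite big_mkcond [X in _ <= X]big_mkcond /=; apply: ler_sum => i _.
case: (boolP (P i)) => Pi; first by rewrite (PQ i Pi).
by case: (boolP (Q i)) => Qi //; exact: f0.
Qed.

Lemma core (R : realType) n (D : {set 'I_n * 'I_n}) (p L : R)
  (bad : pred {set 'I_n * 'I_n}) :
  0 <= p <= 1 -> p * expR L <= L ^+ 2 -> n%:R = expR L -> L0 R <= L ->
  (forall F, bad F -> exists s (A : {set 'I_n}),
     [/\ (0 < #|A|)%N, ln (#|A|%:R : R) <= 9/10 * L &
       exists B : {set 'I_n}, (#|B|%:R < #|A|%:R * (L / 2000)) /\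
         #|A|%:R * (L / 1000) <= (#|[set e in F | cell s A B e]|)%:R]) ->
  \sum_(F : {set 'I_n * 'I_n} | (F \subset D) && bad F) wt D p F <= expR (- L).
Proof.
move=> /andP[p0 p1] pL nL HL Hbad.
have Lge : 30 <= L.
  have := expR_ge0 (4000:R); have := expR_ge0 (expR (1:R)).
  rewrite /L0 in HL; lra.
have wt0 : forall F, 0 <= wt D p F.
  by move=> F; rewrite /wt mulr_ge0 // exprn_ge0 // subr_ge0.
set gd := fun A : {set 'I_n} => (0 < #|A|)%N && (ln (#|A|%:R : R) <= 9/10 * L).
set G := fun F => \sum_(s : bool) \sum_(A | gd A) \sum_(B : {set 'I_n}) gfun L s A B F.
have step1 : \sum_(F : {set 'I_n * 'I_n} | (F \subset D) && bad F) wt D p F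
     <= \sum_(F : {set 'I_n * 'I_n} | F \subset D) wt D p F * G F.
  rewrite big_mkcondr /=; apply: ler_sum => F _.
  case: ifP => badF; last by rewrite mulr_ge0 // /G sumr_ge0 // => s _;
     rewrite sumr_ge0 // => A _; rewrite sumr_ge0 // => B _; exact: expR_ge0.
  rewrite ler_peMr //.
  have [s [A [A0 la [B [HB Hec]]]]] := Hbad F badF.
  apply: le_trans (@sum3_ge R _ _ _ gd (fun s A B => gfun L s A B F) s A B _ _); last first.
  - by move=> *; exact: expR_ge0.
  - by rewrite /gd A0 la.
  rewrite /gfun; apply: le_trans (_ : expR 0 <= _); first by rewrite expR0.
  rewrite ler_expR.
  have a0 : 0 <= ln (#|A|%:R : R) by rewrite ln_ge0 // ler1n.
  apply: addr_ge0; apply: mulr_ge0; lra.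
apply: le_trans step1 _.
rewrite (eq_bigr (fun F => \sum_(s : bool) \sum_(A | gd A) \sum_(B : {set 'I_n})
            wt D p F * gfun L s A B F)); last first.
  move=> F _; rewrite /G mulr_sumr; apply: eq_bigr => s _; rewrite mulr_sumr.
  by apply: eq_bigr => A _; rewrite mulr_sumr.
rewrite exchange_big /=.
set r := expR (- 3 * L).
apply: le_trans (_ : \sum_(s : bool) \sum_(A : {set 'I_n} | (0 < #|A|)%N) r ^+ #|A| <= _).
  apply: ler_sum => s _; rewrite exchange_big /=.
  apply: le_trans (_ : \sum_(A | gd A) r ^+ #|A| <= _).
    apply: ler_sum => A /andP[A0 la]; rewrite exchange_big /=.
    exact: (@perA R n D p L s A (ltac:(by rewrite p0 p1)) pL nL HL A0 la).
  apply: sub_sum; first by move=> A /andP[].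
  by move=> A _; rewrite exprn_ge0 // expR_ge0.
have -> : \sum_(A : {set 'I_n} | (0 < #|A|)%N) r ^+ #|A| = (r + 1) ^+ n - 1.
  rewrite -[n in _ ^+ n]card_ord -sum_pow_card [in RHS](bigD1 set0) //= cards0 expr0.
  rewrite [RHS]addrC addKr.
  by apply: eq_bigl => A; rewrite card_gt0.
rewrite sumr_const card_bool.
set x := expR (- 2 * L).
have x0 : 0 < x by exact: expR_gt0.
have nr : n%:R * r = x by rewrite nL /r /x -expRD; congr expR; lra.
have H1 : (r + 1) ^+ n <= expR x.
  rewrite -nr expRM_natl; apply: lerXn2r; rewrite ?nnegrE ?addr_ge0 ?expR_ge0 //.
  by rewrite addrC expR_ge1Dx.
have Ex : expR x * (1 - x) <= 1.
  have := expR_ge1Dx (- x); rewrite -(expRxMexpNx_1 x).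
  have := expR_gt0 x; nra.
set y := expR (- L).
have y0 : 0 < y by exact: expR_gt0.
have yE : y * expR L = 1 by rewrite mulrC expRxMexpNx_1.
have EL : 4 <= expR L by have := expR_ge1Dx L; lra.
have xy : x = y * y by rewrite /x /y -expRD; congr expR; lra.
have y4 : 4 * y <= 1 by nra.
have xh : x <= 1/2 by nra.
have Ex2 : expR x - 1 <= 2 * x.
  have E1 : 1 <= expR x by rewrite -[X in X <= _]expR0 ler_expR ltW.
  nra.
rewrite mulr2n.
have : (r + 1) ^+ n - 1 <= 2 * x by lra.
nra.
Qed.

Theorem lemma3p6 (R : realType) (k : nat -> nat)
  (E : forall n : nat, 'I_n -> 'I_n -> bool)
  (S T : forall n : nat, {set 'I_n}) :
  (forall n, bip_regular (k n) (E n)) ->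
  (forall M : R, exists N : nat, forall n : nat, (N <= n)%N ->
     M < ((k n)%:R / n%:R) * (ln (n%:R : R)) `^ (3^-1)) ->
  exists c : R, 0 < c /\ exists N : nat, forall n : nat, (N <= n)%N ->
    Gp_prob (E n) (p1 R n (k n)) (fun F => ~~ good_event R (S n) (T n) F)
      <= (n%:R : R) `^ (- c).
Proof.
move=> _ Hk.
have [N1 HN1] := Hk 1.
have [N2 HN2] : exists N2 : nat, expR (L0 R) < N2%:R.
  by exists (Num.bound (expR (L0 R))); apply: archi_boundP; exact: expR_ge0.
exists 1; split => //; exists (maxn N1 N2) => n.
rewrite geq_max => /andP[nN1 nN2].
have Hkn := HN1 n nN1.
set K := k n in Hkn *.
set L := ln (n%:R : R) in Hkn *.
have nge : expR (L0 R) < n%:R.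
  by apply: lt_le_trans HN2 _; rewrite ler_nat.
have npos : 0 < (n%:R : R) by apply: lt_trans nge; exact: expR_gt0.
have nL : n%:R = expR L by rewrite /L lnK // posrE.
have HL : L0 R <= L by rewrite -ler_expR -nL ltW.
have LL0 : 48 * 1000 * expR 4000 + expR (expR 1) + 30 <= L by [].
have e4 := expR_ge0 (4000 : R).
have L30 : 30 <= L by have := expR_ge0 (expR (1:R)); lra.
have lam : L `^ 3^-1 <= L.
  by apply: ler1_powR; [lra | rewrite invf_le1 // ?ler1n].
have nKL : n%:R < K%:R * L.
  have : 1 < K%:R / n%:R * L.
    apply: lt_le_trans Hkn _; apply: ler_wpM2l => //.
    by rewrite divr_ge0 // ltW.
  by rewrite mulrAC ltr_pdivlMr // mul1r.
have K0 : 0 < (K%:R : R).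
  rewrite ltr0n lt0n; apply/negP => /eqP K0; move: nKL; rewrite K0 mul0r.
  by move=> /(lt_trans npos); rewrite ltxx.
have lnL : expR 1 <= ln L.
  rewrite -ler_expR lnK ?posrE; last by lra.
  by have := expR_ge0 (expR (1:R)); lra.
have lnL0 : 0 < ln L by apply: lt_le_trans lnL; exact: expR_gt0.
have llnL : 1 <= ln (ln L).
  by rewrite -ler_expR lnK ?posrE.
set l3 := ln (ln (ln L)).
have l30 : 0 <= l3 by rewrite /l3 ln_ge0.
have l3L : l3 <= L.
  have h1 := ln_sublinear (_ : 0 < ln (ln L)); have h2 := ln_sublinear lnL0.
  have h3 := ln_sublinear (_ : 0 < L).
  have : 0 < ln (ln L) by lra.
  move=> /h1 h1'; have : 0 < L by lra. move=> /h3 h3'.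
  rewrite /l3; lra.
set p := p1 R n K.
have pK : p * K%:R = L - l3.
  by rewrite /p /p1 -/L divfK // gt_eqF.
have p0 : 0 <= p by rewrite /p /p1 -/L divr_ge0 // ?subr_ge0 // ltW.
have pL : p * expR L <= L ^+ 2.
  rewrite -nL -(ler_pM2r K0) mulrAC pK.
  have : 0 <= l3 * n%:R by rewrite mulr_ge0 // ltW.
  have : L * n%:R <= L * (K%:R * L) by rewrite ler_wpM2l ?ltW //; lra.
  nra.
have L2n : L ^+ 2 <= expR L.
  have H := @cube_le_exp R L (ltac:(lra)).
  apply: le_trans H; rewrite !exprS expr0; nra.
have p1' : p <= 1.
  have : p * expR L <= expR L by apply: le_trans pL L2n.
  by rewrite ger_pMl // expR_gt0.
rewrite powR_inv1 ?ler0n // nL -expRN.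
apply: (@core R n (edges (E n)) p L _ _ pL nL HL).
- by rewrite p0 p1'.
  
move=> F /bad_witness [s [A [A0 Asz [B [HB Hec]]]]].
exists s, A; split => //; last by exists B.
rewrite -/L.
have : ln (#|A|%:R : R) <= ln ((n%:R : R) `^ (9 / 10)).
  rewrite ler_ln // posrE ?ltr0n //; exact: powR_gt0.
by rewrite ln_powR.
Qed.
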